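(* Let $p\ge 1$ and let $\sigma$ be a permutation of $[n]$ with exactly $p$ non-left-to-right-maxima that belongs to the basis $\mathcal{B}_{p-1}$. Write $\sigma_{k+1}=n$ and assume $k\ge 1$. Let $\pi$ be the permutation of $[k]$ order-isomorphic to $\sigma_1\sigma_2\cdots\sigma_k$. Then $\pi$ has exactly $p-n+k+1$ non-left-to-right-maxima and $\pi$ belongs to the basis $\mathcal{B}_{p-n+k}$.
   Context: A right-jump transforms $\sigma=\sigma_1\cdots\sigma_n$ into $\sigma_1\cdots\sigma_{i-1}\sigma_{i+1}\cdots\sigma_j\sigma_i\sigma_{j+1}\cdots\sigma_n$ for some $1\le i<j\le n$. A left-to-right maximum of $\sigma$ is an entry $\sigma_i$ with $\sigma_k<\sigma_i$ for all $k<i$; every other entry is a non-left-to-right-maximum. A permutation $\pi$ is a pattern of $\sigma$ (written $\pi\prec\sigma$) if some subsequence of $\sigma$ is order-isomorphic to $\pi$. $\mathcal{C}_q$ is the set of all permutations (of any length $n$) obtainable from the identity $12\cdots n$ by at most $q$ right-jumps. The basis $\mathcal{B}_q$ is the set of permutations $\sigma\notin\mathcal{C}_q$ such that every pattern $\pi\prec\sigma$ with $\pi\ne\sigma$ lies in $\mathcal{C}_q$. *)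

(* Defs.v *)
(* Permutations of [n] are sequences of naturals that are
   rearrangements of 1..n; positions are 0-indexed internally. *)
From mathcomp Require Import all_boot.
Set Implicit Arguments. Unset Strict Implicit. Unset Printing Implicit Defensive.

Definition is_perm (s : seq nat) : bool := perm_eq s (iota 1 (size s)).

Definition idperm (n : nat) : seq nat := iota 1 n.

(* right-jump with 0-indexed positions i < j (i.e. 1-indexed i+1 < j+1):
   s_1..s_i s_{i+2}..s_{j+1} s_{i+1} s_{j+2}..s_n *)
Definition right_jump (s : seq nat) (i j : nat) : seq nat :=
  take i s ++ drop i.+1 (take j.+1 s) ++ [:: nth 0 s i] ++ drop j.+1 s.

Fixpoint in_C (q : nat) (s : seq nat) : Prop :=
  match q with
  | 0 => s = idperm (size s)
  | q'.+1 => in_C q' s \/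
      exists t i j, [/\ i < j, j < size t, in_C q' t & s = right_jump t i j]
  end.

Definition order_iso (a b : seq nat) : Prop :=
  size a = size b /\
  forall i j, i < size a -> j < size a ->
    (nth 0 a i < nth 0 a j) = (nth 0 b i < nth 0 b j).

Definition pattern (pi sigma : seq nat) : Prop :=
  exists m : bitseq, size m = size sigma /\ order_iso (mask m sigma) pi.

Definition in_basis (q : nat) (sigma : seq nat) : Prop :=
  [/\ is_perm sigma, ~ in_C q sigma &
      forall pi, is_perm pi -> pattern pi sigma -> pi <> sigma -> in_C q pi].

Definition is_lrmax (s : seq nat) (i : nat) : bool :=
  all (fun x => x < nth 0 s i) (take i s).

Definition nlrm (s : seq nat) : nat :=
  count (fun i => ~~ is_lrmax s i) (iota 0 (size s)).

(* Main.v *)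
Require Import Defs.
From mathcomp Require Import all_boot zify.
Set Implicit Arguments. Unset Strict Implicit. Unset Printing Implicit Defensive.

Fixpoint NN (m : nat) (s : seq nat) : nat :=
  match s with [::] => 0 | y :: s' => (~~ (m <= y)) + NN (maxn m y.+1) s' end.
Definition mx (m : nat) (a : seq nat) : nat := foldl (fun m y => maxn m y.+1) m a.

Lemma NN_cat m a b : NN m (a ++ b) = NN m a + NN (mx m a) b.
Proof. elim: a m => [|y a IH] m //=. by rewrite IH addnA. Qed.

Lemma mx_max m z a : mx (maxn m z) a = maxn (mx m a) z.
Proof. elim: a m => [|y a IH] m //=. by rewrite -IH maxnAC. Qed.

Lemma mx_ge m a : m <= mx m a.
Proof. elim: a m => [|y a IH] m //=. apply: leq_trans (IH _). exact: leq_maxl. Qed.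

Lemma mx_le m a y : (mx m a <= y) = (m <= y) && all (fun x => x < y) a.
Proof.
elim: a m => [|z a IH] m /=; first by rewrite andbT.
rewrite IH geq_max andbA. done.
Qed.

Lemma NN_mono m m' s : m <= m' -> NN m s <= NN m' s.
Proof.
elim: s m m' => [|y s IH] m m' //= h.
apply: leq_add; last by apply: IH; lia.
case: (leqP m y) => h1; case: (leqP m' y) => h2 //=; lia.
Qed.

Lemma NN_all m s : all (fun y => y < m) s -> NN m s = size s.
Proof.
elim: s => [|y s IH] //= /andP[h1 h2].
have -> : maxn m y.+1 = m by apply/maxn_idPl.
by rewrite IH // leqNgt h1.
Qed.

Lemma nlrmE s : nlrm s = NN 0 s.
Proof.
suff H : forall p, count (fun i => ~~ is_lrmax (p ++ s) i) (iota (size p) (size s))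
   = NN (mx 0 p) s.
  by have := H [::]; rewrite /nlrm /= => ->.
elim: s => [|y s IH] p //=.
have -> : is_lrmax (p ++ y :: s) (size p) = (mx 0 p <= y).
  by rewrite /is_lrmax take_size_cat // nth_cat ltnn subnn /= mx_le.
congr (_ + _).
have := IH (rcons p y). rewrite cat_rcons size_rcons => ->.
by rewrite /mx foldl_rcons.
Qed.

Lemma rjE a x b c :
  right_jump (a ++ x :: b ++ c) (size a) (size a + size b) = a ++ b ++ x :: c.
Proof.
rewrite /right_jump take_size_cat // nth_cat ltnn subnn /=.
have E : a ++ x :: b ++ c = (rcons a x ++ b) ++ c by rewrite -catA cat_rcons.
rewrite E take_size_cat; last by rewrite size_cat size_rcons addSn.
rewrite (@drop_size_cat _ (size a + size b).+1); last by rewrite size_cat size_rcons addSn.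
by rewrite drop_size_cat // size_rcons.
Qed.

Lemma rj_decomp t i j : i < j -> j < size t ->
  exists (a : seq nat) x (b c : seq nat), [/\ t = a ++ x :: b ++ c, size a = i & size a + size b = j].
Proof.
move=> hij hj.
exists (take i t), (nth 0 t i), (take (j - i) (drop i.+1 t)), (drop (j - i) (drop i.+1 t)).
split.
- by rewrite cat_take_drop -drop_nth ?cat_take_drop //; lia.
- rewrite size_takel //; lia.
- rewrite size_takel ?size_takel ?size_drop; lia.
Qed.

Lemma NN_rj a x b c : NN 0 (a ++ b ++ x :: c) <= NN 0 (a ++ x :: b ++ c) + 1.
Proof.
rewrite !NN_cat /= NN_cat -!addnA leq_add2l.
set m := mx 0 a.
have h1 : NN m b <= NN (maxn m x.+1) b by apply: NN_mono; apply: leq_maxl.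
have h2 : mx m (b ++ [:: x]) = mx (maxn m x.+1) b.
  by rewrite mx_max /mx foldl_cat.
have : NN (maxn (mx m b) x.+1) c = NN (mx (maxn m x.+1) b) c.
  by rewrite mx_max.
rewrite /=. move=> ->.
case: (m <= x); case: (mx m b <= x) => /=; lia.
Qed.

Lemma inC_NN q s : in_C q s -> NN 0 s <= q.
Proof.
elim: q s => [|q IH] s /=.
- move=> ->. rewrite /idperm. move: (size s) => n.
  suff H : forall m k, m <= k -> NN m (iota k n) = 0 by rewrite H.
  elim: n => [|n IHn] m k hk //=.
  rewrite hk /= IHn //; lia.
- case=> [/IH h|[t [i [j [hij hj ht ->]]]]]; first by lia.
  have := IH _ ht.
  have [a [x [b [c [Et Ea Eb]]]]] := rj_decomp hij hj.
  rewrite Et -Ea -Eb rjE. have := NN_rj a x b c. lia.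
Qed.

Lemma inC_mono q q' s : q <= q' -> in_C q s -> in_C q' s.
Proof.
elim: q' => [|q' IH] h; first by have -> : q = 0 by lia.
case: (ltngtP q q'.+1) h => // [hl _ hs|-> _ //]. left; apply: IH => //; lia.
Qed.

Lemma first_bad s m : 0 < NN m s ->
  exists (a : seq nat) x c, [/\ s = a ++ x :: c, NN m a = 0 & ~~ (mx m a <= x)].
Proof.
elim: s m => [|y s IH] m //=.
case: (leqP m y) => h /=.
- rewrite add0n => /IH [a [x [c [-> h1 h2]]]].
  exists (y :: a), x, c; split => //=. by rewrite h.
- move=> _; exists [::], y, s; split => //=. by rewrite -ltnNge.
Qed.

Lemma split_inc a m x : NN m a = 0 -> m <= x -> x < mx m a -> x \notin a ->
  exists a1 y a2, [/\ a = a1 ++ y :: a2, mx m a1 <= x & x < y].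
Proof.
elim: a m => [|y a IH] m /=; first by lia.
case: (leqP m y) => //= hmy. rewrite add0n => h0 hmx hx.
rewrite in_cons negb_or => /andP[hxy hxa].
case: (ltnP x y) => hyx.
- by exists [::], y, a.
- have hy : y < x by rewrite ltn_neqAle eq_sym hxy hyx.
  have [|a1 [y' [a2 [-> h1 h2]]]] := IH (maxn m y.+1) h0 _ hx hxa; first by lia.
  by exists (y :: a1), y', a2.
Qed.

Lemma perm_sorted_id s : is_perm s -> NN 0 s = 0 -> s = idperm (size s).
Proof.
move=> hp h0.
have hs : sorted leq s.
  case: s hp h0 => [|y s] //= _.
  have -> : maxn 0 y.+1 = y.+1 by rewrite max0n.
  elim: s y => [|z s IH] y //=.
  case: (leqP y.+1 z) => //= hz. rewrite add0n.
  have -> : maxn y.+1 z.+1 = z.+1 by lia.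
  move=> /IH ->. by rewrite andbT ltnW.
apply: (sorted_eq leq_trans anti_leq hs (iota_sorted _ _) hp).
Qed.

Lemma NN_inC s : is_perm s -> in_C (NN 0 s) s.
Proof.
move Hn : (NN 0 s) => n. elim: n s Hn => [|n IH] s Hn hp /=.
  exact: perm_sorted_id.
right.
have hu : uniq s by rewrite (perm_uniq hp) iota_uniq.
have [|a [x [c [Es h0 hx]]]] := first_bad (m := 0) (s := s); first by rewrite Hn.
have hxa : x \notin a.
  by move: hu; rewrite Es cat_uniq /= negb_or => /and3P[_ /andP[]].
have hx' : x < mx 0 a by rewrite ltnNge.
have [a1 [y [a2 [Ea h1 h2]]]] := split_inc h0 (leq0n x) hx' hxa.
pose t := a1 ++ x :: (y :: a2) ++ c.
have Es' : s = a1 ++ (y :: a2) ++ x :: c by rewrite Es Ea -catA.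
have Nt : NN 0 t = n.
  move: Hn. rewrite Es' /t !NN_cat /=.
  have -> : maxn (mx 0 a1) x.+1 = x.+1 by lia.
  have -> : maxn x.+1 y.+1 = y.+1 by lia.
  have -> : maxn (mx 0 a1) y.+1 = y.+1 by lia.
  rewrite !NN_cat /=.
  have hm := mx_ge y.+1 a2.
  have -> : maxn (mx y.+1 a2) x.+1 = mx y.+1 a2 by lia.
  have -> : (mx 0 a1 <= y) = true by lia.
  have -> : (mx 0 a1 <= x) = true by lia.
  have -> : (x.+1 <= y) = true by lia.
  have -> : (mx y.+1 a2 <= x) = false by lia.
  simpl. lia.
have ht : is_perm t.
  have pst : perm_eq t s.
    rewrite Es' /t perm_cat2l.
    by rewrite -cat1s perm_catCA.
  rewrite /is_perm (perm_size pst). exact: perm_trans pst hp.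
exists t, (size a1), (size a1 + size (y :: a2)); split.
- rewrite /=; lia.
- rewrite /t /= !size_cat /= size_cat; lia.
- exact: IH.
- by rewrite Es' /t rjE.
Qed.

Lemma inC_iff q s : is_perm s -> in_C q s <-> NN 0 s <= q.
Proof.
move=> hp; split; first exact: inC_NN.
move=> h; exact: inC_mono h (NN_inC hp).
Qed.

Lemma oi_sym a b : order_iso a b -> order_iso b a.
Proof. move=> [hs h]; split => // i j hi hj; rewrite h // hs //. Qed.

Lemma oi_trans a b c : order_iso a b -> order_iso b c -> order_iso a c.
Proof.
move=> [hs h] [hs' h']; split; first by rewrite hs.
move=> i j hi hj; rewrite h // h' // -hs //.
Qed.

Lemma oi_map a b J : order_iso a b -> (forall i, i \in J -> i < size a) ->
  order_iso (map (nth 0 a) J) (map (nth 0 b) J).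
Proof.
move=> [hs h] hJ; split; first by rewrite !size_map.
move=> i j; rewrite size_map => hi hj.
rewrite !(nth_map 0) //. apply: h; apply: hJ; exact: mem_nth.
Qed.

Lemma maskE (a : seq nat) m : mask m a = map (nth 0 a) (mask m (iota 0 (size a))).
Proof. by rewrite map_mask; congr mask; exact: (esym (mkseq_nth 0 a)). Qed.

Lemma oi_mask a b m : order_iso a b -> order_iso (mask m a) (mask m b).
Proof.
move=> h; have hs := h.1.
rewrite (maskE a) (maskE b) -hs; apply: oi_map => // i /mem_mask; rewrite mem_iota; lia.
Qed.

Lemma nlrm_oi a b : order_iso a b -> nlrm a = nlrm b.
Proof.
move=> [hs h]; rewrite /nlrm -hs; apply: eq_in_count => i; rewrite mem_iota => /andP[_ hi].
rewrite /= /is_lrmax.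
rewrite -[in take i a](mkseq_nth 0 a) -[in take i b](mkseq_nth 0 b) /mkseq -hs.
rewrite -!map_take !take_iota !all_map; congr negb.
apply: eq_in_all => j; rewrite mem_iota => /andP[_ hj] /=.
apply: h; lia.
Qed.

Lemma count_lt_iota v m n : count (fun y => y < v) (iota m n) = minn (v - m) n.
Proof.
elim: n m => [|n IH] m /=; first by rewrite minn0.
rewrite IH; case: (ltnP m v) => h; lia.
Qed.

Lemma perm_nth s i : is_perm s -> i < size s ->
  nth 0 s i = (count (fun j => nth 0 s j < nth 0 s i) (iota 0 (size s))).+1.
Proof.
move=> hp hi.
have : nth 0 s i \in iota 1 (size s) by rewrite -(perm_mem hp) mem_nth.
rewrite mem_iota => hv.
set v := nth 0 s i in hv *.
have E : count (fun y => y < v) s = count (fun j => nth 0 s j < v) (iota 0 (size s)).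
  transitivity (count (fun y => y < v) (map (nth 0 s) (iota 0 (size s)))).
    by congr count; exact: (esym (mkseq_nth 0 s)).
  by rewrite count_map.
rewrite -E (permP hp) count_lt_iota; lia.
Qed.

Lemma perm_oi_eq a b : is_perm a -> is_perm b -> order_iso a b -> a = b.
Proof.
move=> ha hb [hs h]; apply: (eq_from_nth (x0 := 0) hs) => i hi.
rewrite perm_nth // [RHS]perm_nth -?hs //; congr S.
apply: eq_in_count => j; rewrite mem_iota => /andP[_ hj]; exact: h.
Qed.

Definition std (u : seq nat) := map (fun y => count (fun z => z <= y) u) u.

Lemma count_le_mono (u : seq nat) y1 y2 : y1 <= y2 ->
  count (fun z => z <= y1) u <= count (fun z => z <= y2) u.
Proof. move=> h; apply: sub_count => z /= hz; exact: leq_trans hz h. Qed.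

Lemma count_le_strict (u : seq nat) y1 y2 : y1 < y2 -> y2 \in u ->
  count (fun z => z <= y1) u < count (fun z => z <= y2) u.
Proof.
move=> h; elim: u => [|z u IH] //=; rewrite in_cons => /orP[/eqP <-|hu].
- have := count_le_mono u (ltnW h). rewrite leqnn. case: leqP => ?; lia.
- have := IH hu. case: (leqP z y1) => hz1; case: (leqP z y2) => hz2 //=; lia.
Qed.

Lemma std_lt (u : seq nat) y1 y2 : y1 \in u -> y2 \in u ->
  (y1 < y2) = (count (fun z => z <= y1) u < count (fun z => z <= y2) u).
Proof.
move=> h1 h2; case: (ltnP y1 y2) => h.
- by rewrite count_le_strict.
- by rewrite ltnNge count_le_mono.
Qed.

Lemma std_oi u : order_iso u (std u).
Proof.
split; first by rewrite size_map.
move=> i j hi hj; rewrite !(nth_map 0) //; apply: std_lt; exact: mem_nth.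
Qed.

Lemma std_perm u : uniq u -> is_perm (std u).
Proof.
move=> hu.
have hsu : uniq (std u).
  rewrite map_inj_in_uniq // => y1 y2 h1 h2 he.
  have := std_lt h1 h2; have := std_lt h2 h1; rewrite he ltnn => e1 e2.
  apply/eqP; rewrite eqn_leq leqNgt e1 leqNgt e2 //.
have hsub : {subset std u <= iota 1 (size (std u))}.
  move=> v /mapP[y hy ->]; rewrite mem_iota size_map.
  have := count_size (fun z => z <= y) u.
  have : 0 < count (fun z => z <= y) u by rewrite -has_count; apply/hasP; exists y.
  lia.
have [hsz heq] := uniq_min_size hsu hsub (eq_leq (size_iota _ _)).
rewrite /is_perm; apply: uniq_perm => //; exact: iota_uniq.
Qed.

Lemma NN_split Q n S : all (fun y => y < n) Q -> all (fun y => y < n.+1) S ->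
  NN 0 (Q ++ n :: S) = NN 0 Q + size S.
Proof.
move=> hQ hS; rewrite NN_cat /=.
have h : mx 0 Q <= n by rewrite mx_le hQ.
rewrite h /= add0n. have -> : maxn (mx 0 Q) n.+1 = n.+1 by lia.
by rewrite (NN_all hS).
Qed.

Lemma mask_all_true (m : bitseq) (s : seq nat) : all id m -> size m = size s -> mask m s = s.
Proof.
elim: m s => [|b m IH] [|x s] //= /andP[-> hm] [hs]. by rewrite IH.
Qed.

Theorem mainTheorem6 (p n k : nat) (sigma pi : seq nat) :
  1 <= p ->
  size sigma = n -> is_perm sigma ->
  nlrm sigma = p ->
  in_basis p.-1 sigma ->
  k < n -> nth 0 sigma k = n ->
  1 <= k ->
  is_perm pi -> size pi = k -> order_iso pi (take k sigma) ->
  [/\ n <= p + k, nlrm pi + n = p + k + 1 & in_basis (p + k - n) pi].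
Proof.
move=> hp hsz hperm hN hB hkn hnth hk hpi hsp hoi.
have hu : uniq sigma by rewrite (perm_uniq hperm) iota_uniq.
set P := take k sigma in hoi *. set S := drop k.+1 sigma.
have Esig : sigma = P ++ n :: S.
  by rewrite /P /S -hnth -drop_nth ?cat_take_drop // hsz.
have hmem : forall x, x \in sigma -> x < n.+1.
  move=> x; rewrite (perm_mem hperm) mem_iota hsz; lia.
have hnP : n \notin P.
  by move: hu; rewrite Esig cat_uniq /= negb_or => /and3P[_ /andP[]].
have hPlt : forall Q, {subset Q <= P} -> all (fun y => y < n) Q.
  move=> Q hQ; apply/allP => x /hQ hx.
  have : x < n.+1 by apply: hmem; rewrite Esig mem_cat hx.
  have : x != n by apply: contraNneq hnP => <-.
  lia.
have hSle : all (fun y => y < n.+1) S.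
  apply/allP => x hx; apply: hmem; rewrite Esig mem_cat in_cons hx !orbT //.
have hsP : size P = k by rewrite /P size_takel // hsz ltnW.
have hsS : size S = n - k.+1 by rewrite /S size_drop hsz.
have hNs : p = nlrm P + size S.
  by rewrite -hN !nlrmE Esig NN_split // hPlt.
have L : forall mP, size mP = k -> count id mP < k ->
    nlrm (mask mP P) + size S <= p.-1.
  move=> mP hm hc.
  set u := mask mP P ++ n :: S.
  set ms := mP ++ true :: nseq (size S) true.
  have hmask : mask ms sigma = u.
    by rewrite {1}Esig /ms mask_cat ?hm ?hsP //= mask_true ?size_nseq.
  have huu : uniq u by rewrite -hmask mask_uniq.
  case: hB => _ _ H.
  have hsu : size u = count id mP + (size S).+1 by rewrite size_cat size_mask ?hm ?hsP.
  have hpat : pattern (std u) sigma.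
    exists ms; split; first by rewrite /ms size_cat /= size_nseq hm hsz; lia.
    rewrite hmask; exact: std_oi.
  have hne : std u <> sigma.
    move=> E; have := congr1 size E; rewrite size_map hsu hsz; lia.
  move: (H _ (std_perm huu) hpat hne) => /inC_NN; rewrite -nlrmE -(nlrm_oi (std_oi u)) nlrmE NN_split ?nlrmE //.
  by apply: hPlt => x /mem_mask.
have hnpk : n <= p + k.
  have := L (nseq k false) (size_nseq _ _).
  rewrite count_nseq /= mul0n => /(_ hk).
  rewrite mask_false /nlrm /=. lia.
have hNpi : nlrm pi = nlrm P by apply: nlrm_oi.
split => //; first by lia.
split => //.
- move=> /inC_NN; rewrite -nlrmE; lia.
- move=> tau htau [m [hm hmo]] hne.
  apply/inC_iff => //; rewrite -nlrmE -(nlrm_oi hmo).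
  case: (ltnP (count id m) k) => hc.
  + have := L m (etrans hm hsp) hc. rewrite -(nlrm_oi (oi_mask m hoi)). lia.
  + have hall : all id m by rewrite all_count eqn_leq count_size hm hsp hc.
    have E := mask_all_true hall hm.
    exfalso; apply: hne; apply: esym; apply: perm_oi_eq => //.
    by rewrite -E.
Qed.
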